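(* Let $(\mathcal E,S,\Theta_A(\mathcal E))$ and $(\mathcal F,T,\Theta_A(\mathcal F))$ be right functional $A$-modules and $(X,f)$ a functional module homomorphism between them with $X$ surjective. Then $(X,f)$ induces a ring homomorphism $\sigma\colon\mathcal K_A(\mathcal E)\to\mathcal K_A(\mathcal F)$, and $f$ is injective. If $(X,f)$ is an isomorphism (i.e. $X$ and $f$ are bijective), then $\sigma$ is an isomorphism and extends to an isomorphism $\mathcal L_A(\mathcal E)\to\mathcal L_A(\mathcal F)$.
   Context: $G$ is a discrete group; $(A,\alpha)$ is an associative ring (not necessarily commutative or unital) with $G$-action. A right functional $A$-module is a right $A$-module $\mathcal E$ with a $G$-action $S$ by additive bijections with $S_g(\xi a)=S_g(\xi)\alpha_g(a)$, together with a functional space $\Theta_A(\mathcal E)\subseteq\mathrm{Hom}_A(\mathcal E,A)$ which is a left $A$-submodule ($(a\varphi)(\xi)=a\varphi(\xi)$) invariant under $\varphi\mapsto\alpha_g\circ\varphi\circ S_{g^{-1}}$. The compact operators $\mathcal K_A(\mathcal E)$ are the finite sums of $\theta_{\eta,\varphi}(\xi)=\eta\varphi(\xi)$ ($\eta\in\mathcal E$, $\varphi\in\Theta_A(\mathcal E)$); the adjointable operators $\mathcal L_A(\mathcal E)$ are the $V\in\mathrm{Hom}_A(\mathcal E,\mathcal E)$ with $\varphi\circ V\in\Theta_A(\mathcal E)$ for all $\varphi\in\Theta_A(\mathcal E)$. A functional module homomorphism $(X,f)$ from $\mathcal E$ to $\mathcal F$ consists of a $G$-equivariant right $A$-module homomorphism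 $X\colon\mathcal E\to\mathcal F$ and a $G$-equivariant left $A$-module homomorphism $f\colon\Theta_A(\mathcal E)\to\Theta_A(\mathcal F)$ such that $f(\varphi)(X(\xi))=\varphi(\xi)$ for all $\varphi\in\Theta_A(\mathcal E)$, $\xi\in\mathcal E$. *)

(* Defs.v *)
From HB Require Import structures.
From mathcomp Require Import all_boot all_algebra.
Set Implicit Arguments.
Unset Strict Implicit.
Unset Printing Implicit Defensive.
Import GRing.Theory.
Local Open Scope ring_scope.

(* A : an associative, not necessarily unital nor commutative ring, given as
   an additive group [A : zmodType] together with a multiplication [mulA]
   satisfying [nonunital_ring_axioms]. *)

Section Defs.
Variable G : groupType.
Variable A : zmodType.
Variable mulA : A -> A -> A.

Definition nonunital_ring_axioms : Prop :=
  [/\ associative mulA,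
      left_distributive mulA +%R & right_distributive mulA +%R].

Definition ring_action (alpha : G -> A -> A) : Prop :=
  [/\ forall g x y, alpha g (x + y) = alpha g x + alpha g y,
      forall g x y, alpha g (mulA x y) = mulA (alpha g x) (alpha g y),
      forall g, bijective (alpha g),
      forall x, alpha 1%g x = x
    & forall g h x, alpha (g * h)%g x = alpha g (alpha h x)].

Variable alpha : G -> A -> A.

Section Module.
Variable E : zmodType.
Variable ract : E -> A -> E.

Definition right_module : Prop :=
  [/\ forall xi eta a, ract (xi + eta) a = ract xi a + ract eta a,
      forall xi a b, ract xi (a + b) = ract xi a + ract xi b
    & forall xi a b, ract xi (mulA a b) = ract (ract xi a) b].

Definition module_action (S : G -> E -> E) : Prop :=
  [/\ forall g xi eta, S g (xi + eta) = S g xi + S g eta,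
      forall g, bijective (S g),
      forall xi, S 1%g xi = xi,
      forall g h xi, S (g * h)%g xi = S g (S h xi)
    & forall g xi a, S g (ract xi a) = ract (S g xi) (alpha g a)].

Definition is_hom_to_A (phi : E -> A) : Prop :=
  (forall xi eta, phi (xi + eta) = phi xi + phi eta) /\
  (forall xi a, phi (ract xi a) = mulA (phi xi) a).

Definition functional_space (S : G -> E -> E) (Theta : (E -> A) -> Prop) : Prop :=
  [/\ forall phi, Theta phi -> is_hom_to_A phi,
      Theta (fun _ => 0),
      forall phi psi, Theta phi -> Theta psi -> Theta (fun xi => phi xi - psi xi),
      forall a phi, Theta phi -> Theta (fun xi => mulA a (phi xi))
    & forall g phi, Theta phi -> Theta (fun xi => alpha g (phi (S g^-1%g xi)))].

Definition functional_module (S : G -> E -> E) (Theta : (E -> A) -> Prop) : Prop :=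
  [/\ right_module, module_action S & functional_space S Theta].

Definition theta_op (eta : E) (phi : E -> A) : E -> E :=
  fun xi => ract eta (phi xi).

Definition compact_op (Theta : (E -> A) -> Prop) (K : E -> E) : Prop :=
  exists (n : nat) (eta : 'I_n -> E) (phi : 'I_n -> E -> A),
    (forall i, Theta (phi i)) /\
    (forall xi, K xi = \sum_(i < n) theta_op (eta i) (phi i) xi).

Definition adjointable_op (Theta : (E -> A) -> Prop) (V : E -> E) : Prop :=
  [/\ forall xi eta, V (xi + eta) = V xi + V eta,
      forall xi a, V (ract xi a) = ract (V xi) a
    & forall phi, Theta phi -> Theta (fun xi => phi (V xi))].

End Module.

Definition op_add (E : zmodType) (K1 K2 : E -> E) : E -> E :=
  fun xi => K1 xi + K2 xi.

(* A functional module homomorphism (X, f).  f is given as a function on all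
   of E -> A, only its values on Theta_A(E) matter. *)
Definition functional_module_hom (E F : zmodType)
    (ractE : E -> A -> E) (S : G -> E -> E) (ThetaE : (E -> A) -> Prop)
    (ractF : F -> A -> F) (T : G -> F -> F) (ThetaF : (F -> A) -> Prop)
    (X : E -> F) (f : (E -> A) -> (F -> A)) : Prop :=
  [/\
      (forall xi eta, X (xi + eta) = X xi + X eta)
      /\ (forall xi a, X (ractE xi a) = ractF (X xi) a)
      /\ (forall g xi, X (S g xi) = T g (X xi)),
      forall phi, ThetaE phi -> ThetaF (f phi),
      (forall phi psi, ThetaE phi -> ThetaE psi ->
          f (fun xi => phi xi + psi xi) = (fun z => f phi z + f psi z))
      /\ (forall a phi, ThetaE phi ->
          f (fun xi => mulA a (phi xi)) = (fun z => mulA a (f phi z)))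
      /\ (forall g phi, ThetaE phi ->
          f (fun xi => alpha g (phi (S g^-1%g xi)))
          = (fun z => alpha g (f phi (T g^-1%g z))))
    & forall phi xi, ThetaE phi -> f phi (X xi) = phi xi].

End Defs.

(* Main.v *)
Require Import Defs.
From HB Require Import structures.
From mathcomp Require Import all_boot all_algebra.
From Stdlib Require Import ClassicalEpsilon FunctionalExtensionality.
Import GRing.Theory.
Local Open Scope ring_scope.

Theorem lemma2p8 (G : groupType) (A : zmodType) (mulA : A -> A -> A)
  (alpha : G -> A -> A)
  (E F : zmodType)
  (ractE : E -> A -> E) (S : G -> E -> E) (ThetaE : (E -> A) -> Prop)
  (ractF : F -> A -> F) (T : G -> F -> F) (ThetaF : (F -> A) -> Prop)
  (X : E -> F) (f : (E -> A) -> (F -> A)) :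
  nonunital_ring_axioms mulA ->
  ring_action mulA alpha ->
  functional_module mulA alpha ractE S ThetaE ->
  functional_module mulA alpha ractF T ThetaF ->
  functional_module_hom mulA alpha ractE S ThetaE ractF T ThetaF X f ->
  (forall z : F, exists xi : E, X xi = z) ->
  exists sigma : (E -> E) -> (F -> F),
    (* sigma : K_A(E) -> K_A(F) is a ring homomorphism ... *)
    [/\ forall K, compact_op ractE ThetaE K -> compact_op ractF ThetaF (sigma K),
        forall K1 K2, compact_op ractE ThetaE K1 -> compact_op ractE ThetaE K2 ->
          sigma (op_add K1 K2) = op_add (sigma K1) (sigma K2),
        forall K1 K2, compact_op ractE ThetaE K1 -> compact_op ractE ThetaE K2 ->
          sigma (K1 \o K2) = sigma K1 \o sigma K2,
    (* ... induced by (X, f) *)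
        forall eta phi, ThetaE phi ->
          sigma (theta_op ractE eta phi) = theta_op ractF (X eta) (f phi)
    &
    (* f is injective (on Theta_A(E)) *)
    (forall phi psi, ThetaE phi -> ThetaE psi -> f phi = f psi -> phi = psi)
    /\
    (* if (X, f) is an isomorphism ... *)
    (bijective X ->
     (forall psi, ThetaF psi -> exists2 phi, ThetaE phi & f phi = psi) ->
       (* ... sigma is an isomorphism K_A(E) -> K_A(F) ... *)
       ((forall K1 K2, compact_op ractE ThetaE K1 -> compact_op ractE ThetaE K2 ->
           sigma K1 = sigma K2 -> K1 = K2)
        /\ (forall K', compact_op ractF ThetaF K' ->
              exists2 K, compact_op ractE ThetaE K & sigma K = K'))
       /\
       (* ... which extends to a ring isomorphism L_A(E) -> L_A(F) *)
       (exists tau : (E -> E) -> (F -> F),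
         [/\ forall V, adjointable_op ractE ThetaE V ->
               adjointable_op ractF ThetaF (tau V),
             forall V1 V2, adjointable_op ractE ThetaE V1 ->
               adjointable_op ractE ThetaE V2 ->
               tau (op_add V1 V2) = op_add (tau V1) (tau V2),
             forall V1 V2, adjointable_op ractE ThetaE V1 ->
               adjointable_op ractE ThetaE V2 ->
               tau (V1 \o V2) = tau V1 \o tau V2,
             (forall V1 V2, adjointable_op ractE ThetaE V1 ->
               adjointable_op ractE ThetaE V2 -> tau V1 = tau V2 -> V1 = V2)
             /\ (forall V', adjointable_op ractF ThetaF V' ->
               exists2 V, adjointable_op ractE ThetaE V & tau V = V')
           & forall K, compact_op ractE ThetaE K -> tau K = sigma K]))].
Proof.
move=> _ _ [[_ rA2 _] _ [ThE0 _ _ ThEmul _]] [_ _ [ThF0 _ _ _ _]] [[Xadd [Xr _]] fTh _ fX] Xsurj.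
have X0 : X 0 = 0.
  have H := Xadd 0 0; rewrite addr0 in H.
  by symmetry; apply: (addrI (X 0)); rewrite addr0 -H.
have Xsum : forall n (g : 'I_n -> E), X (\sum_(i < n) g i) = \sum_(i < n) X (g i).
  by move=> n g; apply: (big_morph X Xadd X0).
have XK : forall K, compact_op ractE ThetaE K ->
  exists n (eta : 'I_n -> E) (phi : 'I_n -> E -> A), (forall i, ThetaE (phi i)) /\
    (forall xi, K xi = \sum_(i < n) theta_op ractE (eta i) (phi i) xi) /\
    forall a, X (K a) = \sum_(i < n) theta_op ractF (X (eta i)) (f (phi i)) (X a).
  move=> K [n [eta [phi [Hphi HK]]]]; exists n, eta, phi; split=> //; split=> // a.
  rewrite HK Xsum; apply: eq_bigr => i _; rewrite /theta_op Xr fX //.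
have wd : forall K, compact_op ractE ThetaE K -> forall a b, X a = X b -> X (K a) = X (K b).
  move=> K /XK [n [eta [phi [_ [_ H]]]]] a b Hab; by rewrite !H Hab.
have Xs : forall z, {xi | X xi = z}.
  move=> z; apply: constructive_indefinite_description; exact: Xsurj.
pose sigma := fun (K : E -> E) (z : F) => X (K (proj1_sig (Xs z))).
have sigmaX : forall K, compact_op ractE ThetaE K -> forall a, sigma K (X a) = X (K a).
  move=> K HK a; rewrite /sigma; apply: wd => //; exact: (proj2_sig (Xs (X a))).
have finj : forall phi psi, ThetaE phi -> ThetaE psi -> f phi = f psi -> phi = psi.
  move=> phi psi Hp Hq Hf; apply: functional_extensionality => xi.
  by rewrite -(fX phi xi Hp) -(fX psi xi Hq) Hf.
have compadd : forall K1 K2, compact_op ractE ThetaE K1 -> compact_op ractE ThetaE K2 ->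
    compact_op ractE ThetaE (op_add K1 K2).
  move=> K1 K2 [n1 [e1 [p1 [H1 E1]]]] [n2 [e2 [p2 [H2 E2]]]].
  exists (n1 + n2)%N, (fun i => match split i with inl j => e1 j | inr j => e2 j end),
    (fun i => match split i with inl j => p1 j | inr j => p2 j end); split.
    by move=> i; case: (split i).
  move=> xi; rewrite /op_add E1 E2 big_split_ord /=; congr (_ + _); apply: eq_bigr => i _.
    by have /= -> := unsplitK (inl i : 'I_n1 + 'I_n2).
  by have /= -> := unsplitK (inr i : 'I_n1 + 'I_n2).
have compcomp : forall K1 K2, compact_op ractE ThetaE K1 -> compact_op ractE ThetaE K2 ->
    compact_op ractE ThetaE (K1 \o K2).
  have cext : forall K K', (forall xi, K xi = K' xi) -> compact_op ractE ThetaE K ->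
      compact_op ractE ThetaE K'.
    move=> K K' HKK [n [e [p [Hp HK]]]]; exists n, e, p; split=> // xi.
    by rewrite -HKK.
  have csum : forall n (Ks : 'I_n -> E -> E), (forall j, compact_op ractE ThetaE (Ks j)) ->
      compact_op ractE ThetaE (fun xi => \sum_(j < n) Ks j xi).
    elim=> [|n IH] Ks HKs.
      exists 0%N, (fun _ => 0), (fun _ _ => 0); split; first by case.
      by move=> xi; rewrite !big_ord0.
    apply: (cext (op_add (fun xi => \sum_(j < n) Ks (widen_ord (leqnSn n) j) xi) (Ks ord_max))).
      by move=> xi; rewrite big_ord_recr.
    apply: compadd => //; apply: IH => j; exact: HKs.
  have cadd : forall K, compact_op ractE ThetaE K -> forall a b, K (a + b) = K a + K b.
    move=> K [n [e [p [Hp HK]]]] a b; rewrite !HK -big_split; apply: eq_bigr => i _.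
    rewrite /theta_op; case: (ThE0 _ (Hp i)) => padd _; by rewrite padd rA2.
  have cz : forall K, compact_op ractE ThetaE K -> K 0 = 0.
    move=> K HK; have H := cadd K HK 0 0; rewrite addr0 in H.
    by symmetry; apply: (addrI (K 0)); rewrite addr0 -H.
  have cth : forall K e p, compact_op ractE ThetaE K -> ThetaE p ->
      compact_op ractE ThetaE (fun xi => K (ractE e (p xi))).
    move=> K e p [n [e1 [p1 [Hp1 HK]]]] Hp.
    exists n, e1, (fun i xi => mulA (p1 i e) (p xi)); split.
      by move=> i; apply: ThEmul.
    move=> xi; rewrite HK; apply: eq_bigr => i _; rewrite /theta_op.
    by case: (ThE0 _ (Hp1 i)) => _ ->.
  move=> K1 K2 H1 [n2 [e2 [p2 [Hp2 HK2]]]].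
  apply: (cext (fun xi => \sum_(j < n2) K1 (ractE (e2 j) (p2 j xi)))).
    move=> xi; rewrite /= HK2; symmetry; apply: (big_morph K1 (cadd K1 H1) (cz K1 H1)).
  apply: csum => j; exact: cth.
exists sigma; split.
- move=> K /XK [n [eta [phi [Hphi [_ H]]]]].
  exists n, (fun i => X (eta i)), (fun i => f (phi i)); split; first by move=> i; apply: fTh.
  move=> z; rewrite /sigma H; by case: (Xs z) => xi /= ->.
- move=> K1 K2 H1 H2; apply: functional_extensionality => z.
  case: (Xsurj z) => a <-.
  rewrite sigmaX; last exact: compadd.
  by rewrite /op_add Xadd !sigmaX.
- move=> K1 K2 H1 H2; apply: functional_extensionality => z.
  case: (Xsurj z) => a <-.
  by rewrite sigmaX; [rewrite /= !sigmaX | exact: compcomp].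
- move=> eta phi Hphi; apply: functional_extensionality => z.
  rewrite /sigma /theta_op Xr; case: (Xs z) => xi /= <-; by rewrite fX.
split=> //.
move=> [Xi XiK KXi] fsurj.
have sigmaE : forall K, compact_op ractE ThetaE K -> forall z, sigma K z = X (K (Xi z)).
  by move=> K HK z; rewrite -{1}(KXi z) sigmaX.
have Xinj : injective X := can_inj XiK.
have Xiadd : forall z1 z2, Xi (z1 + z2) = Xi z1 + Xi z2.
  by move=> z1 z2; apply: Xinj; rewrite Xadd !KXi.
have Xir : forall z a, Xi (ractF z a) = ractE (Xi z) a.
  by move=> z a; apply: Xinj; rewrite Xr !KXi.
split; first split.
- move=> K1 K2 H1 H2 Hs; apply: functional_extensionality => xi.
  apply: Xinj; by rewrite -!sigmaX // Hs.
- move=> K' [n [eta' [psi' [Hpsi HK']]]].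
  have [phi Hphi] : exists phi : 'I_n -> E -> A, forall i, ThetaE (phi i) /\ f (phi i) = psi' i.
    have H : forall i, exists phi, ThetaE phi /\ f phi = psi' i.
      by move=> i; case: (fsurj _ (Hpsi i)) => phi ? ?; exists phi.
    exists (fun i => proj1_sig (constructive_indefinite_description _ (H i))).
    move=> i; exact: (proj2_sig (constructive_indefinite_description _ (H i))).
  have HK : compact_op ractE ThetaE (fun xi => \sum_(i < n) theta_op ractE (Xi (eta' i)) (phi i) xi).
    by exists n, (fun i => Xi (eta' i)), phi; split=> // i; case: (Hphi i).
  exists (fun xi => \sum_(i < n) theta_op ractE (Xi (eta' i)) (phi i) xi) => //.
  apply: functional_extensionality => z; rewrite sigmaE // HK' Xsum.
  apply: eq_bigr => i _; rewrite /theta_op Xr KXi; case: (Hphi i) => Hp <-.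
  by rewrite -{2}(KXi z) fX.
exists (fun V z => X (V (Xi z))); split.
- move=> V [Vadd Vr VTh]; split.
  + by move=> z1 z2; rewrite Xiadd Vadd Xadd.
  + by move=> z a; rewrite Xir Vr Xr.
  + move=> psi Hpsi; case: (fsurj _ Hpsi) => phi Hphi <-.
    have -> : (fun xi => f phi (X (V (Xi xi)))) = f (fun xi => phi (V xi)).
      apply: functional_extensionality => z; rewrite fX // -{2}(KXi z) fX //; exact: VTh.
    by apply: fTh; apply: VTh.
- move=> V1 V2 _ _; apply: functional_extensionality => z; by rewrite /op_add Xadd.
- move=> V1 V2 _ _; apply: functional_extensionality => z; by rewrite /= XiK.
- split.
  + move=> V1 V2 _ _ Ht; apply: functional_extensionality => xi; apply: Xinj.
    have := congr1 (fun t => t (X xi)) Ht => /=; by rewrite !XiK.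
  + move=> V' [Vadd Vr VTh].
    exists (fun xi => Xi (V' (X xi))); last first.
      by apply: functional_extensionality => z; rewrite /= !KXi.
    split.
    * by move=> a b; rewrite Xadd Vadd Xiadd.
    * by move=> a r; rewrite Xr Vr Xir.
    * move=> phi Hphi.
      have H1 : ThetaF (fun z => f phi (V' z)) by apply: VTh; apply: fTh.
      case: (fsurj _ H1) => phi' Hp' Hf'.
      have -> : (fun xi => phi (Xi (V' (X xi)))) = phi'.
        apply: functional_extensionality => xi.
        by rewrite -(fX phi' xi Hp') Hf' -{2}(KXi (V' (X xi))) fX.
      done.
- move=> K HK; apply: functional_extensionality => z; by rewrite sigmaE.
Qed.
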